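(* Let $k\ge 0$ and let $P_{4k+2}$ be the path with vertices labeled $1,2,\dots,4k+2$ consecutively. Then $\tau(P_{4k+2})=(k+1)^2$, and for each vertex $v$, writing $v=4q+r$ with $0\le r<4$, $$TDV(v)=\begin{cases}(k+1)q & \text{if } v\equiv 0 \pmod 4,\\ (k+1)(q+1) & \text{if } v\equiv 1 \pmod 4,\\ (k+1)(k+1-q) & \text{if } v\equiv 2 \pmod 4,\\ (k+1)(k-q) & \text{if } v\equiv 3 \pmod 4.\end{cases}$$
   Context: A set $D \subseteq V(G)$ is a total dominating set of a graph $G$ if every vertex of $G$ has a neighbor in $D$. $\gamma_t(G)$ is the minimum cardinality of a total dominating set; a minimum one is a $\gamma_t(G)$-set. $\tau(G)$ is the number of $\gamma_t(G)$-sets and $TDV(v)$ is the number of $\gamma_t(P_{4k+2})$-sets containing $v$. *)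

(* Defs.v *)
From mathcomp Require Import all_boot.
Set Implicit Arguments. Unset Strict Implicit. Unset Printing Implicit Defensive.

Definition is_tds (T : finType) (e : rel T) (D : {set T}) : bool :=
  [forall v : T, [exists u in D, e v u]].

(* gamma_t(G): minimum cardinality of a total dominating set
   (defaults to #|T| if none exists, which never happens for the paths used). *)
Definition gamma_t (T : finType) (e : rel T) : nat :=
  \big[minn/#|T|]_(D : {set T} | is_tds e D) #|D|.

Definition is_gamma_t_set (T : finType) (e : rel T) (D : {set T}) : bool :=
  is_tds e D && (#|D| == gamma_t e).

Definition tau (T : finType) (e : rel T) : nat :=
  #|[set D : {set T} | is_gamma_t_set e D]|.

Definition TDV (T : finType) (e : rel T) (v : T) : nat :=
  #|[set D : {set T} | is_gamma_t_set e D & v \in D]|.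

(* The path P_n on vertex type 'I_n; the vertex i : 'I_n carries label i+1,
   so labels run over 1..n consecutively. *)
Definition path_adj (n : nat) : rel 'I_n :=
  fun i j => (i.+1 == j :> nat) || (j.+1 == i :> nat).

(* Main.v *)
From mathcomp Require Import all_boot zify.
Require Import Defs.
Set Implicit Arguments. Unset Strict Implicit. Unset Printing Implicit Defensive.

Definition pat (a j : nat) : bool := if j < 2 * a then j %% 2 == 1 else j %% 2 == 0.

Lemma modS2 j : j.+2 %% 2 = j %% 2.
Proof. lia. Qed.

Lemma patS a j : pat a.+1 j.+2 = pat a j.
Proof. by rewrite /pat mulnS add2n !ltnS modS2. Qed.

Lemma pat0S j : pat 0 j.+2 = pat 0 j.
Proof. by rewrite /pat !muln0 !ltn0 modS2. Qed.

Lemma pat_lem k : forall e : nat -> bool,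
  (forall i, i < k -> e (2*i).+1 = ~~ e (2*i)) ->
  (forall j, j < 2*k -> e j || e j.+1) ->
  e (2*k) ->
  exists2 a, a <= k & forall j, j <= 2*k -> e j = pat a j.
Proof.
elim: k => [|k IH] e H1 H2 H3; last first.
  2: exists 0 => // j; rewrite muln0 leqn0 => /eqP ->; by rewrite /pat H3.
have P1 : forall i, i < k -> e (2*i).+3 = ~~ e (2*i).+2.
  move=> i Hi; have := H1 i.+1; rewrite mulnS add2n; apply; lia.
have P2 : forall j, j < 2*k -> e j.+2 || e j.+3.
  move=> j Hj; apply: H2; lia.
have P3 : e (2*k).+2 by rewrite -add2n -mulnS.
have [a' Ha' He'] := IH (fun j => e j.+2) P1 P2 P3.
case E0: (e 0).
- have E1 : e 1 = false by rewrite (H1 0) // E0.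
  have E2 : e 2 by have := H2 1; rewrite E1; apply; lia.
  have a'0 : a' = 0.
    case: a' Ha' He' => // a'' _ He'; have := He' 0 (leq0n _).
    by rewrite E2 /pat mulnS add2n.
  subst a'.
  exists 0 => // -[|[|j]] Hj; rewrite ?E0 ?E1 //.
  by rewrite pat0S He' //; lia.
- have E1 : e 1 = true by rewrite (H1 0) // E0.
  exists a'.+1; first lia.
  move=> -[|[|j]] Hj; rewrite ?E0 ?E1 //.
    by rewrite /pat mulnS add2n.
  by rewrite patS He' //; lia.
Qed.

Definition patc (c j : nat) : bool := if 2 * c < j then j %% 2 == 1 else j %% 2 == 0.
Definition F (a c i : nat) : bool := if i %% 2 == 1 then patc c (i %/ 2) else pat a (i %/ 2).

Lemma pat1 a i : pat a (2*i).+1 = ~~ pat a (2*i).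
Proof. rewrite /pat; case: ifP; case: ifP => *; lia. Qed.
Lemma pat2 a j : pat a j || pat a j.+1.
Proof. rewrite /pat; case: ifP; case: ifP => *; lia. Qed.
Lemma pat3 a k : a <= k -> pat a (2*k).
Proof. rewrite /pat; case: ifP => *; lia. Qed.
Lemma patc1 c i : patc c (2*i).+2 = ~~ patc c (2*i).+1.
Proof. rewrite /patc; case: ifP; case: ifP => *; lia. Qed.
Lemma patc2 c j : patc c j || patc c j.+1.
Proof. rewrite /patc; case: ifP; case: ifP => *; lia. Qed.
Lemma patc0 c : patc c 0.
Proof. by rewrite /patc ltn0. Qed.
Lemma patc_pat b k j : b <= k -> j <= 2*k -> pat b (2*k - j) = patc (k-b) j.
Proof. move=> *; rewrite /pat /patc; case: ifP; case: ifP => *; lia. Qed.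

Lemma Feven a c j : F a c (2*j) = pat a j.
Proof.
rewrite /F; have -> : (2*j) %% 2 == 1 = false by lia.
by have -> : (2*j) %/ 2 = j by lia.
Qed.
Lemma Fodd a c j : F a c (2*j).+1 = patc c j.
Proof.
rewrite /F; have -> : (2*j).+1 %% 2 == 1 = true by lia.
by have -> : (2*j).+1 %/ 2 = j by lia.
Qed.

Definition dD n (D : {set 'I_n}) (i : nat) : bool := [exists u in D, val u == i].

Lemma dD_val n (D : {set 'I_n}) (u : 'I_n) : dD D u = (u \in D).
Proof.
apply/existsP/idP => [[w /andP[Hw /eqP/val_inj E]]|Hu]; first by rewrite -E.
by exists u; rewrite Hu eqxx.
Qed.

Lemma dD_out n (D : {set 'I_n}) i : n <= i -> dD D i = false.
Proof. move=> Hi; apply/existsP => -[w /andP[_ /eqP /= Hw]]; have := ltn_ord w; lia. Qed.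

Lemma tdsP n (D : {set 'I_n}) : is_tds (@path_adj n) D <->
  (forall i, i < n -> (0 < i) && dD D i.-1 || dD D i.+1).
Proof.
split.
- move=> /forallP H i Hi. have /existsP [u /andP [Hu Hadj]] := H (Ordinal Hi).
  move: Hadj; rewrite /path_adj /= => /orP [/eqP E | /eqP E].
  + apply/orP; right; apply/existsP; exists u; by rewrite Hu E eqxx.
  + apply/orP; left; rewrite -E /=; apply/existsP; exists u; by rewrite Hu eqxx.
- move=> H; apply/forallP => v.
  have /orP [/andP [Hp /existsP [u /andP [Hu /eqP /= E]]] | /existsP [u /andP [Hu /eqP /= E]]]
    := H v (ltn_ord v).
  + apply/existsP; exists u; rewrite Hu /path_adj; apply/orP; right; apply/eqP; lia.
  + apply/existsP; exists u; rewrite Hu /path_adj; apply/orP; left; apply/eqP; lia.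
Qed.

Lemma cardD n (D : {set 'I_n}) : #|D| = \sum_(0 <= i < n) dD D i.
Proof.
rewrite big_mkord -sum1_card big_mkcond /=; apply: eq_bigr => i _.
by rewrite dD_val; case: (i \in D).
Qed.

Lemma sum4 (d : nat -> nat) m : \sum_(0 <= i < m.+4) d i =
  \sum_(0 <= i < m) d i + d m + d m.+1 + d m.+2 + d m.+3.
Proof. rewrite !big_nat_recr //=; lia. Qed.

Lemma Sdecomp (d : nat -> bool) k : \sum_(0 <= i < 4*k+2) d i =
  d 1 + d (4*k) + \sum_(0 <= i < k) (d (4*i) + d (4*i+2) + (d (4*i+3) + d (4*i+5))).
Proof.
elim: k => [|k IH].
  rewrite muln0 !big_nat_recr //= !big_geq //; lia.
have -> : 4*k.+1+2 = (4*k+2).+4 by lia.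
rewrite sum4 IH big_nat_recr //=.
have -> : (4*k+2).+3 = 4*k+5 by lia.
have -> : (4*k+2).+2 = 4*k.+1 by lia.
have -> : (4*k+2).+1 = 4*k+3 by lia.
lia.
Qed.

Lemma sum_pairs k (g h : nat -> nat) : (forall i, i < k -> 1 <= g i /\ 1 <= h i) ->
  2*k <= \sum_(0 <= i < k) (g i + h i) /\
  (\sum_(0 <= i < k) (g i + h i) = 2*k -> forall i, i < k -> g i = 1 /\ h i = 1).
Proof.
elim: k => [|k IH] H; first by rewrite big_geq //; split => // _ i.
have [IH1 IH2] := IH (fun i Hi => H i (ltnW Hi)).
have [Hg Hh] := H k (ltnSn k).
rewrite big_nat_recr //=; split; first lia.
move=> E i Hi; case: (ltngtP i k) => Hik.
- apply: IH2 => //; lia.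
- lia.
- subst i; lia.
Qed.

Lemma dFset' k a c i : dD [set u : 'I_(4*k+2) | F a c u] i = (i < 4*k+2) && F a c i.
Proof.
case: (ltnP i (4*k+2)) => Hi /=; last by rewrite dD_out.
have -> : i = val (Ordinal Hi) by [].
by rewrite dD_val inE.
Qed.

Definition Fset k (a c : nat) : {set 'I_(4*k+2)} := [set u : 'I_(4*k+2) | F a c u].

Lemma tds_facts k (D : {set 'I_(4*k+2)}) : is_tds (@path_adj _) D ->
  dD D 1 /\ dD D (4*k) /\ forall i, i < k ->
    1 <= dD D (4*i) + dD D (4*i+2) /\ 1 <= dD D (4*i+3) + dD D (4*i+5).
Proof.
move/tdsP => H.
split; first by have := H 0 ltac:(lia).
split.
  have := H (4*k+1) ltac:(lia).
  have -> : (4*k+1).-1 = 4*k by lia.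
  rewrite [dD D (4*k+1).+1]dD_out; last lia.
  lia.
move=> i Hi; split.
  have := H (4*i+1) ltac:(lia).
  have -> : (4*i+1).-1 = 4*i by lia.
  have -> : (4*i+1).+1 = 4*i+2 by lia.
  lia.
have := H (4*i+4) ltac:(lia).
have -> : (4*i+4).-1 = 4*i+3 by lia.
have -> : (4*i+4).+1 = 4*i+5 by lia.
lia.
Qed.

Lemma lower k (D : {set 'I_(4*k+2)}) : is_tds (@path_adj _) D ->
  2*k+2 <= #|D| /\ (#|D| = 2*k+2 -> forall i, i < k ->
    dD D (4*i) + dD D (4*i+2) = 1 /\ dD D (4*i+3) + dD D (4*i+5) = 1).
Proof.
move=> Ht; have [H1 [H2 H3]] := tds_facts Ht.
rewrite cardD Sdecomp.
have [S1 S2] := sum_pairs (g := fun i => dD D (4*i) + dD D (4*i+2))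
  (h := fun i => dD D (4*i+3) + dD D (4*i+5)) H3.
split; first lia.
move=> E; apply: S2; lia.
Qed.

Lemma Fset_tds k a c : a <= k -> c <= k -> is_tds (@path_adj _) (Fset k a c).
Proof.
move=> Ha Hc; apply/tdsP => i Hi; rewrite /Fset !dFset'.
have [j [Ej|Ej]] : exists j, i = 2*j \/ i = (2*j).+1 by exists (i %/ 2); lia.
- subst i. case: j Hi => [|j] Hi.
    rewrite /= (_ : 1 = (2*0).+1) // Fodd patc0; lia.
  have -> : (2*j.+1).-1 = (2*j).+1 by lia.
  rewrite !Fodd; have := patc2 c j; lia.
- subst i.
  have -> : ((2*j).+1).-1 = 2*j by [].
  have -> : ((2*j).+1).+1 = 2*j.+1 by lia.
  rewrite !Feven.
  case: (ltnP j (2*k)) => Hj.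
    have := pat2 a j; lia.
  have Ej : j = 2*k by lia.
  subst j; have := pat3 Ha; lia.
Qed.

Lemma Fset_card k a c : a <= k -> c <= k -> #|Fset k a c| = 2*k+2.
Proof.
move=> Ha Hc; rewrite cardD Sdecomp /Fset !dFset'.
rewrite (eq_big_nat _ _ (F2 := fun=> 2)); last first.
  move=> i /andP [_ Hi]; rewrite !dFset'.
  have -> : 4*i+5 = (2*(2*i).+2).+1 by lia.
  have -> : 4*i+3 = (2*(2*i).+1).+1 by lia.
  have -> : 4*i+2 = 2*(2*i).+1 by lia.
  have -> : 4*i = 2*(2*i) by lia.
  rewrite !Feven !Fodd pat1 patc1.
  have -> : (2*(2*i).+2).+1 < 4*k+2 by lia.
  have -> : (2*(2*i).+1).+1 < 4*k+2 by lia.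
  have -> : 2*(2*i).+1 < 4*k+2 by lia.
  have -> : 2*(2*i) < 4*k+2 by lia.
  by case: (pat a (2*i)); case: (patc c (2*i).+1).
rewrite sum_nat_const_nat.
have -> : 1 = (2*0).+1 by [].
have -> : 4*k = 2*(2*k) by lia.
rewrite Feven Fodd patc0 pat3 //.
rewrite !andbT; lia.
Qed.

Lemma char k (D : {set 'I_(4*k+2)}) : is_tds (@path_adj _) D -> #|D| = 2*k+2 ->
  exists a c, a <= k /\ c <= k /\ D = Fset k a c.
Proof.
move=> Ht Hc. have [_ Hp] := lower Ht. have {}Hp := Hp Hc.
have [H1 [H2 _]] := tds_facts Ht. move/tdsP: (Ht) => HT.
have P1 : forall i, i < k -> dD D (2*(2*i).+1) = ~~ dD D (2*(2*i)).
  move=> i Hi /=; have [E _] := Hp i Hi.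
  have -> : 2*(2*i).+1 = 4*i+2 by lia. have -> : 2*(2*i) = 4*i by lia. lia.
have P2 : forall j, j < 2*k -> dD D (2*j) || dD D (2*j.+1).
  move=> j Hj /=; have := HT (2*j).+1 ltac:(lia).
  have -> : ((2*j).+1).-1 = 2*j by [].
  have -> : ((2*j).+1).+1 = 2*j.+1 by lia. lia.
have P3 : dD D (2*(2*k)) by have -> : 2*(2*k) = 4*k by lia.
have [a Ha Hea] := @pat_lem k (fun j => dD D (2*j)) P1 P2 P3.
have Q1 : forall i, i < k -> dD D (4*k - 2*(2*i).+1).+1 = ~~ dD D (4*k - 2*(2*i)).+1.
  move=> i Hi /=; have [_ E] := Hp (k.-1 - i) ltac:(lia).
  have -> : (4*k - 2*(2*i).+1).+1 = 4*(k.-1-i)+3 by lia.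
  have -> : (4*k - 2*(2*i)).+1 = 4*(k.-1-i)+5 by lia. lia.
have Q2 : forall j, j < 2*k -> dD D (4*k - 2*j).+1 || dD D (4*k - 2*j.+1).+1.
  move=> j Hj /=; have := HT (4*k - 2*j) ltac:(lia).
  have -> : (4*k-2*j).-1 = (4*k - 2*j.+1).+1 by lia. lia.
have Q3 : dD D (4*k - 2*(2*k)).+1 by have -> : (4*k - 2*(2*k)).+1 = 1 by lia.
have [b Hb Heb] := @pat_lem k (fun j => dD D (4*k - 2*j).+1) Q1 Q2 Q3.
exists a, (k - b); split => //; split; first lia.
apply/setP => u; rewrite -!dD_val /Fset dFset' ltn_ord /=.
have := ltn_ord u.
have [j [Ej|Ej]] : exists j, nat_of_ord u = 2*j \/ nat_of_ord u = (2*j).+1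
  by exists (u %/ 2); lia.
- rewrite Ej Feven => Hu; apply: Hea; lia.
- rewrite Ej Fodd => Hu; rewrite -patc_pat; [|lia|lia].
  have := Heb (2*k - j) ltac:(lia) => /= <-.
  by have -> : (4*k - 2*(2*k-j)).+1 = (2*j).+1 by lia.
Qed.

Lemma bigmin_le_seq (I : eqType) (r : seq I) (P : pred I) (f : I -> nat) x0 x :
  x \in r -> P x -> \big[minn/x0]_(i <- r | P i) f i <= f x.
Proof.
elim: r => //= y r IH; rewrite in_cons big_cons => /orP [/eqP <- ->|Hx Px].
  exact: geq_minl.
case: (P y); last exact: IH.
exact: leq_trans (geq_minr _ _) (IH Hx Px).
Qed.

Lemma gammaE k : gamma_t (@path_adj (4*k+2)) = 2*k+2.
Proof.
apply/eqP; rewrite eqn_leq; apply/andP; split.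
  rewrite -(@Fset_card k 0 0) //; rewrite /gamma_t.
  apply: bigmin_le_seq; first exact: mem_index_enum.
  exact: Fset_tds.
rewrite /gamma_t; apply: (big_ind (fun x => 2*k+2 <= x)).
- rewrite card_ord; lia.
- move=> x y Hx Hy; rewrite leq_min Hx Hy //.
- move=> D Ht; by have [] := lower Ht.
Qed.

Lemma gsetE k D : is_gamma_t_set (@path_adj (4*k+2)) D =
  is_tds (@path_adj _) D && (#|D| == 2*k+2).
Proof. by rewrite /is_gamma_t_set gammaE. Qed.

Definition fp k (p : 'I_k.+1 * 'I_k.+1) : {set 'I_(4*k+2)} := Fset k p.1 p.2.

Lemma fp_inj k : injective (@fp k).
Proof.
move=> [a c] [a' c'] E.
have Ev : forall i, i < 4*k+2 -> F a c i = F a' c' i.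
  move=> i Hi; have := congr1 (fun S => dD S i) E; by rewrite /= /fp /Fset !dFset' Hi.
have := ltn_ord a; have := ltn_ord a'; have := ltn_ord c; have := ltn_ord c'.
move=> Hc' Hc Ha' Ha.
congr pair; apply: val_inj => /=.
- have := Ev (2*(2*a)) ltac:(lia); have := Ev (2*(2*a')) ltac:(lia).
  rewrite !Feven /pat; repeat (case: ifP => ?); lia.
- have := Ev (2*(2*c)).+1 ltac:(lia); have := Ev (2*(2*c')).+1 ltac:(lia).
  rewrite !Fodd /patc; repeat (case: ifP => ?); lia.
Qed.

Lemma gset_img k v : [set D | is_gamma_t_set (@path_adj (4*k+2)) D & v \in D] =
  (@fp k) @: [set p | v \in fp p].
Proof.
apply/setP => D; rewrite inE gsetE; apply/idP/imsetP.
- case/andP => /andP [Ht /eqP Hc] Hv.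
  have [a [c [Ha [Hc' E]]]] := char Ht Hc.
  have Ep : D = fp (inord a, inord c) by rewrite /fp /= !inordK //; lia.
  exists (inord a, inord c) => //; by rewrite inE -Ep.
- case=> p; rewrite inE => Hv ->; rewrite Hv andbT.
  have := ltn_ord p.1; have := ltn_ord p.2 => H2 H1.
  rewrite Fset_tds ?Fset_card //=; lia.
Qed.

Lemma gset_img' k : [set D | is_gamma_t_set (@path_adj (4*k+2)) D] =
  (@fp k) @: setT.
Proof.
apply/setP => D; rewrite inE gsetE; apply/idP/imsetP.
- case/andP => Ht /eqP Hc.
  have [a [c [Ha [Hc' E]]]] := char Ht Hc.
  exists (inord a, inord c) => //; by rewrite /fp /= !inordK //; lia.
- case=> p _ ->.
  have := ltn_ord p.1; have := ltn_ord p.2 => H2 H1.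
  rewrite Fset_tds ?Fset_card //=; lia.
Qed.

Lemma card_ordP N (P : nat -> bool) : #|[set a : 'I_N | P a]| = \sum_(0 <= a < N) P a.
Proof.
rewrite big_mkord -sum1_card big_mkcond /=; apply: eq_bigr => i _.
by rewrite inE; case: (P i).
Qed.

Lemma card_fst k (P : nat -> bool) :
  #|[set p : 'I_k.+1 * 'I_k.+1 | P p.1]| = (\sum_(0 <= a < k.+1) P a) * k.+1.
Proof.
have -> : [set p : 'I_k.+1 * 'I_k.+1 | P p.1] = setX [set a : 'I_k.+1 | P a] setT.
  by apply/setP => -[a c]; rewrite !inE andbT.
by rewrite cardsX cardsT card_ord card_ordP.
Qed.

Lemma card_snd k (P : nat -> bool) :
  #|[set p : 'I_k.+1 * 'I_k.+1 | P p.2]| = k.+1 * (\sum_(0 <= a < k.+1) P a).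
Proof.
have -> : [set p : 'I_k.+1 * 'I_k.+1 | P p.2] = setX setT [set a : 'I_k.+1 | P a].
  by apply/setP => -[a c]; rewrite !inE.
by rewrite cardsX cardsT card_ord card_ordP.
Qed.

Lemma cntA N m : \sum_(0 <= a < N) pat a (2*m) = minn N m.+1.
Proof. elim: N => [|N IH]; first by rewrite big_geq.
rewrite big_nat_recr //= IH /pat; case: ifP => *; lia. Qed.
Lemma cntB N m : \sum_(0 <= a < N) pat a (2*m).+1 = N - m.+1.
Proof. elim: N => [|N IH]; first by rewrite big_geq.
rewrite big_nat_recr //= IH /pat; case: ifP => *; lia. Qed.
Lemma cntC N m : \sum_(0 <= a < N) patc a (2*m) = N - m.
Proof. elim: N => [|N IH]; first by rewrite big_geq.
rewrite big_nat_recr //= IH /patc; case: ifP => *; lia. Qed.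
Lemma cntD N m : \sum_(0 <= a < N) patc a (2*m).+1 = minn N m.+1.
Proof. elim: N => [|N IH]; first by rewrite big_geq.
rewrite big_nat_recr //= IH /patc; case: ifP => *; lia. Qed.

Theorem proposition5p4 (k : nat) :
  tau (@path_adj (4 * k + 2)) = (k + 1) ^ 2 /\
  forall v : 'I_(4 * k + 2),
    let lab := (nat_of_ord v).+1 in
    let q := lab %/ 4 in
    TDV (@path_adj (4 * k + 2)) v =
      match lab %% 4 with
      | 0 => (k + 1) * q
      | 1 => (k + 1) * (q + 1)
      | 2 => (k + 1) * (k + 1 - q)
      | _ => (k + 1) * (k - q)
      end.
Proof.
split.
  rewrite /tau gset_img' card_imset; last exact: fp_inj.
  rewrite cardsT card_prod card_ord; lia.
move=> v /=.
rewrite /TDV gset_img card_imset; last exact: fp_inj.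
have Hv := ltn_ord v.
have Hset : [set p : 'I_k.+1 * 'I_k.+1 | v \in fp p] =
    [set p : 'I_k.+1 * 'I_k.+1 | F p.1 p.2 v] by apply/setP => p; rewrite !inE.
rewrite Hset.
have [m [r [Hr Ev]]] : exists m r, r < 4 /\ nat_of_ord v = 4*m + r
  by exists (v %/ 4), (v %% 4); lia.
case: r Hr Ev => [|[|[|[|r]]]] // _ Ev.
- have -> : (nat_of_ord v).+1 %% 4 = 1 by lia.
  have -> : (nat_of_ord v).+1 %/ 4 = m by lia.
  have -> : [set p : 'I_k.+1 * 'I_k.+1 | F p.1 p.2 v] = [set p : 'I_k.+1 * 'I_k.+1 | pat p.1 (2*m)].
    by apply/setP => p; rewrite !inE Ev (_ : 4*m+0 = 2*(2*m)) ?Feven //; lia.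
  rewrite (@card_fst k (fun a => pat a (2*m))) cntA; lia.
- have -> : (nat_of_ord v).+1 %% 4 = 2 by lia.
  have -> : (nat_of_ord v).+1 %/ 4 = m by lia.
  have -> : [set p : 'I_k.+1 * 'I_k.+1 | F p.1 p.2 v] = [set p : 'I_k.+1 * 'I_k.+1 | patc p.2 (2*m)].
    by apply/setP => p; rewrite !inE Ev (_ : 4*m+1 = (2*(2*m)).+1) ?Fodd //; lia.
  rewrite (@card_snd k (fun a => patc a (2*m))) cntC; lia.
- have -> : (nat_of_ord v).+1 %% 4 = 3 by lia.
  have -> : (nat_of_ord v).+1 %/ 4 = m by lia.
  have -> : [set p : 'I_k.+1 * 'I_k.+1 | F p.1 p.2 v] = [set p : 'I_k.+1 * 'I_k.+1 | pat p.1 (2*m).+1].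
    by apply/setP => p; rewrite !inE Ev (_ : 4*m+2 = 2*(2*m).+1) ?Feven //; lia.
  rewrite (@card_fst k (fun a => pat a (2*m).+1)) cntB; lia.
- have -> : (nat_of_ord v).+1 %% 4 = 0 by lia.
  have -> : (nat_of_ord v).+1 %/ 4 = m.+1 by lia.
  have -> : [set p : 'I_k.+1 * 'I_k.+1 | F p.1 p.2 v] = [set p : 'I_k.+1 * 'I_k.+1 | patc p.2 (2*m).+1].
    by apply/setP => p; rewrite !inE Ev (_ : 4*m+3 = (2*(2*m).+1).+1) ?Fodd //; lia.
  rewrite (@card_snd k (fun a => patc a (2*m).+1)) cntD; lia.
Qed.
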